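(* (a) For every $M\ge1$ and every $N\times M$ binary matrix $C_{N,M}=(c_{i,a})$, $$\sum_{X\in\{0,1\}^N}\mu_p(X)\,|\mathcal U_0|\ \ge\ B_{M,C_{N,M},p}:=q\sum_{i=1}^N\prod_{a=1}^M\bigl(1-q^{d_a-1}\bigr)^{c_{i,a}},$$ where $q:=1-p$ and $d_a:=\sum_{l=1}^N c_{l,a}$ is the degree of test $a$. (b) If the bipartite graph $\mathcal G(C_{N,M})$ has girth at least $6$, then the inequality in (a) holds with equality.
   Context: Let $N,M\ge1$ be integers and $p\in(0,1)$. A configuration $X=(x_1,\dots,x_N)\in\{0,1\}^N$ is drawn from $\mu_p(X)=\prod_{i} p^{x_i}(1-p)^{1-x_i}$. $C_{N,M}=(c_{i,a})$ is an $N\times M$ binary matrix; variable $i$ belongs to test $a$ iff $c_{i,a}=1$. Test outcome $T_a=0$ if $c_{i,a}x_i=0$ for all $i$, else $T_a=1$. Variable $i$ is a sure zero if some $a$ has $c_{i,a}=1$ and $T_a=0$; $\mathcal U_0$ is the set of $i$ with $x_i=0$ that are not sure zeros. Convention $0^0=1$. $\mathcal G(C_{N,M})$ is the bipartite graph with variable nodes $1,\dots,N$, test nodes $1,\dots,M$ and an edge between $i$ and $a$ iff $c_{i,a}=1$; girth at least $6$ means it has no cycle of length $4$, i.e. no two distinct variables belong to two common distinct tests. *)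

(* Defs.v *)
From mathcomp Require Import all_boot all_order all_algebra.
Set Implicit Arguments. Unset Strict Implicit. Unset Printing Implicit Defensive.
Import Order.TTheory GRing.Theory Num.Theory.
Local Open Scope ring_scope.

Section GroupTesting.
Variables (R : realFieldType) (N M : nat).
Implicit Types (X : {ffun 'I_N -> bool}) (C : 'M[bool]_(N, M)).

Definition mu_p (p : R) X : R :=
  \prod_(i < N) (p ^+ (X i : nat) * (1 - p) ^+ (1 - (X i : nat))%N).

Definition test_outcome C X (a : 'I_M) : bool :=
  [exists i : 'I_N, C i a && X i].

Definition sure_zero C X (i : 'I_N) : bool :=
  [exists a : 'I_M, C i a && ~~ test_outcome C X a].

Definition U0 C X : {set 'I_N} :=
  [set i | ~~ X i & ~~ sure_zero C X i].

Definition test_degree C (a : 'I_M) : nat := \sum_(l < N) (C l a : nat).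

Definition bound_B (p : R) C : R :=
  (1 - p) * \sum_(i < N) \prod_(a < M)
      (1 - (1 - p) ^+ (test_degree C a).-1) ^+ (C i a : nat).

Definition expected_U0 (p : R) C : R :=
  \sum_(X : {ffun 'I_N -> bool}) mu_p p X * (#|U0 C X|)%:R.

(* girth at least 6: no two distinct variables share two distinct tests *)
Definition girth_ge6 C : Prop :=
  forall (i j : 'I_N) (a b : 'I_M), i != j -> a != b ->
    ~~ [&& C i a, C i b, C j a & C j b].

End GroupTesting.

(* Main.v *)
Require Import Defs.
From mathcomp Require Import all_boot all_order all_algebra.
From mathcomp Require Import ring lra.
Set Implicit Arguments. Unset Strict Implicit. Unset Printing Implicit Defensive.
Import Order.TTheory GRing.Theory Num.Theory.
Local Open Scope ring_scope.

Section Harris.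
Variables (R : realFieldType) (N : nat) (p : R).
Hypotheses (Hp0 : 0 <= p) (Hp1 : p <= 1).
Notation cfg := {ffun 'I_N -> bool}.

Definition w (b : bool) : R := if b then p else 1 - p.
Definition upd (X : cfg) (j : 'I_N) (b : bool) : cfg :=
  [ffun k => if k == j then b else X k].
Definition Ej (j : 'I_N) (f : cfg -> R) (X : cfg) : R :=
  p * f (upd X j true) + (1 - p) * f (upd X j false).
Definition EL (L : seq 'I_N) (f : cfg -> R) : cfg -> R := foldr Ej f L.
Definition Exp (f : cfg -> R) : R := \sum_(X : cfg) mu_p p X * f X.

Lemma mu_w (X : cfg) : mu_p p X = \prod_i w (X i).
Proof. by apply: eq_bigr => i _; case: (X i); rewrite /w /= ?expr0 ?expr1 ?mulr1 ?mul1r. Qed.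

Lemma sum_mu : \sum_(X : cfg) mu_p p X = 1.
Proof.
under eq_bigr do rewrite mu_w.
rewrite -(bigA_distr_bigA (fun (i : 'I_N) b => w b)).
by rewrite big1 // => i _; rewrite big_bool /w /= addrC subrK.
Qed.

Lemma w_ge0 b : 0 <= w b.
Proof. by case: b; rewrite /w // subr_ge0. Qed.

Lemma mu_ge0 (X : cfg) : 0 <= mu_p p X.
Proof. by rewrite mu_w; apply: prodr_ge0 => i _; apply: w_ge0. Qed.

Lemma Exp_const c : Exp (fun _ => c) = c.
Proof. by rewrite /Exp -mulr_suml sum_mu mul1r. Qed.

Lemma Exp_scale c f : Exp (fun X => c * f X) = c * Exp f.
Proof. by rewrite /Exp mulr_sumr; apply: eq_bigr => X _; ring. Qed.

Lemma Exp_ext f g : (forall X, f X = g X) -> Exp f = Exp g.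
Proof. by move=> e; apply: eq_bigr => X _; rewrite e. Qed.

Lemma Exp_le f g : (forall X, f X <= g X) -> Exp f <= Exp g.
Proof. by move=> e; apply: ler_sum => X _; by apply: ler_wpM2l; [apply: mu_ge0|apply: e]. Qed.

Lemma Exp_sub c f : Exp (fun X => c - f X) = c - Exp f.
Proof.
rewrite /Exp -[c in RHS]Exp_const /Exp -sumrB; apply: eq_bigr => X _; ring.
Qed.

Lemma updK (X : cfg) j b b' : upd (upd X j b) j b' = upd X j b'.
Proof. by apply/ffunP => k; rewrite !ffunE; case: eqP. Qed.

Lemma upd_id (X : cfg) j : upd X j (X j) = X.
Proof. by apply/ffunP => k; rewrite !ffunE; case: eqP => // ->. Qed.

Lemma mu_upd (X : cfg) j b :
  mu_p p (upd X j b) = w b * \prod_(i | i != j) w (X i).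
Proof.
rewrite mu_w (bigD1 j) //= ffunE eqxx; congr (_ * _).
by apply: eq_bigr => i /negbTE ne; rewrite ffunE ne.
Qed.

Lemma sum_split j (F : cfg -> R) :
  \sum_(X : cfg) F X = \sum_(X : cfg | ~~ X j) (F X + F (upd X j true)).
Proof.
rewrite big_split /= (bigID (fun X : cfg => X j)) /= addrC; congr (_ + _).
rewrite (reindex_onto (fun X => upd X j true) (fun X => upd X j false)) /=.
  apply: eq_big => X; last by [].
  rewrite ffunE eqxx /= updK.
  apply/eqP/idP => [<-|nX]; first by rewrite ffunE eqxx.
  by rewrite -(negbTE nX) upd_id.
by move=> X XJ; rewrite updK -XJ upd_id.
Qed.

Lemma Exp_Ej j f : Exp (Ej j f) = Exp f.
Proof.
rewrite /Exp (sum_split j) [RHS](sum_split j).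
apply: eq_bigr => X nX.
have e0 : X = upd X j false by rewrite -(negbTE nX) upd_id.
set P := \prod_(i | i != j) w (X i).
have m0 : mu_p p X = (1-p) * P by rewrite {1}e0 mu_upd.
have m1 : mu_p p (upd X j true) = p * P by rewrite mu_upd.
rewrite /Ej !updK -e0 m0 m1; ring.
Qed.

Definition mono (f : cfg -> R) :=
  forall X Y : cfg, (forall k, X k ==> Y k) -> f X <= f Y.
Definition dep (A : pred 'I_N) (f : cfg -> R) :=
  forall X Y : cfg, (forall k, A k -> X k = Y k) -> f X = f Y.

Lemma Exp_EL L f : Exp (EL L f) = Exp f.
Proof. by elim: L => //= j L IH; rewrite Exp_Ej. Qed.

Lemma EL_dep L A f : dep A f -> forall X Y : cfg,
  (forall k, k \notin L -> A k -> X k = Y k) -> EL L f X = EL L f Y.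
Proof.
move=> df; elim: L => [|j L IH] X Y /= h.
  by apply: df => k Ak; apply: h.
rewrite /Ej; congr (_ * _ + _ * _); apply: IH => k kL Ak; rewrite !ffunE;
  case: eqP => // /eqP kj; apply: h => //; by rewrite in_cons negb_or kj kL.
Qed.

Lemma EL_const L A f : dep A f -> (forall k, A k -> k \in L) ->
  forall X, EL L f X = Exp f.
Proof.
move=> df hA X; rewrite -(Exp_EL L) -[LHS]Exp_const; apply: Exp_ext => Y.
apply: (EL_dep df) => k kL Ak; by rewrite (hA k Ak) in kL.
Qed.

Lemma upd_mono (X Y : cfg) j b : (forall k, X k ==> Y k) ->
  forall k, upd X j b k ==> upd Y j b k.
Proof. by move=> h k; rewrite !ffunE; case: eqP => // _; rewrite implybb. Qed.

Lemma Ej_mono j f : mono f -> mono (Ej j f).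
Proof.
move=> mf X Y h; rewrite /Ej lerD // ler_wpM2l // ?subr_ge0 //;
  by apply: mf; apply: upd_mono.
Qed.

Lemma EL_mono L f : mono f -> mono (EL L f).
Proof. by move=> mf; elim: L => //= j L IH; apply: Ej_mono. Qed.

Lemma Ej_le j f g : (forall X, f X <= g X) -> forall X, Ej j f X <= Ej j g X.
Proof. by move=> h X; rewrite /Ej lerD // ler_wpM2l ?subr_ge0. Qed.

Lemma Ej_cheb j f g : mono f -> mono g ->
  forall X, Ej j f X * Ej j g X <= Ej j (fun Y => f Y * g Y) X.
Proof.
move=> mf mg X; rewrite /Ej.
have h01 : forall k, upd X j false k ==> upd X j true k.
  by move=> k; rewrite !ffunE; case: eqP => //; rewrite implybb.
have hf := mf _ _ h01; have hg := mg _ _ h01.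
set f1 := f (upd X j true) in hf *; set f0 := f (upd X j false) in hf *.
set g1 := g (upd X j true) in hg *; set g0 := g (upd X j false) in hg *.
have q0 : 0 <= 1 - p by rewrite subr_ge0.
have d1 : 0 <= f1 - f0 by rewrite subr_ge0.
have d2 : 0 <= g1 - g0 by rewrite subr_ge0.
have h := mulr_ge0 (mulr_ge0 Hp0 q0) (mulr_ge0 d1 d2).
have -> : p * (f1 * g1) + (1 - p) * (f0 * g0) =
  (p * f1 + (1 - p) * f0) * (p * g1 + (1 - p) * g0) + p * (1 - p) * ((f1 - f0) * (g1 - g0)) by ring.
by rewrite lerDl.
Qed.

Lemma EL_harris L f g : mono f -> mono g ->
  forall X, EL L f X * EL L g X <= EL L (fun Y => f Y * g Y) X.
Proof.
move=> mf mg; elim: L => [|j L IH] X //=.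
change (Ej j (EL L f) X * Ej j (EL L g) X <= Ej j (EL L (fun Y => f Y * g Y)) X).
apply: le_trans (Ej_cheb j (EL_mono L mf) (EL_mono L mg) X) _.
by apply: Ej_le => Y; apply: IH.
Qed.

Lemma Exp_harris f g : mono f -> mono g -> Exp f * Exp g <= Exp (fun X => f X * g X).
Proof.
move=> mf mg.
have dT : forall h : cfg -> R, dep predT h.
  by move=> h X Y e; congr h; apply/ffunP => k; apply: e.
have inL : forall k : 'I_N, predT k -> k \in enum 'I_N by move=> k _; rewrite mem_enum.
rewrite -[Exp (fun X => f X * g X)](Exp_EL (enum 'I_N)).
have HH := (@Exp_le (fun X => EL (enum 'I_N) f X * EL (enum 'I_N) g X) _ (EL_harris (enum 'I_N) mf mg)). apply: le_trans HH.
rewrite -[X in X <= _]Exp_const; apply: Exp_le => X.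
by rewrite (EL_const (dT f) inL) (EL_const (dT g) inL).
Qed.

Lemma EL_mulr L f g B : dep B g -> (forall j, j \in L -> ~~ B j) ->
  forall X, EL L (fun Y => f Y * g Y) X = EL L f X * g X.
Proof.
move=> dg; elim: L => [|j L IH] hL X //=.
have IH' : forall X, EL L (fun Y => f Y * g Y) X = EL L f X * g X.
  by apply: IH => k kL; apply: hL; rewrite in_cons kL orbT.
have gj : forall b, g (upd X j b) = g X.
  move=> b; apply: dg => k Bk; rewrite ffunE; case: eqP => // kj.
  by move: (hL j (mem_head _ _)); rewrite -kj Bk.
by rewrite /Ej !IH' !gj; ring.
Qed.

Lemma Exp_indep f g (A B : pred 'I_N) : dep A f -> dep B g ->
  (forall k, A k -> B k -> False) -> Exp (fun X => f X * g X) = Exp f * Exp g.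
Proof.
move=> df dg dis.
set L := filter A (enum 'I_N).
rewrite -(Exp_EL L).
rewrite (Exp_ext (EL_mulr f dg _)); last first.
  by move=> j; rewrite mem_filter => /andP [Aj _]; apply/negP => Bj; apply: dis Aj Bj.
rewrite (Exp_ext (f := fun X => EL L f X * g X) (g := fun X => Exp f * g X)).
  by rewrite Exp_scale.
by move=> X; rewrite (EL_const df) // => k Ak; rewrite mem_filter Ak mem_enum.
Qed.
End Harris.

Lemma prod_bool (R : realFieldType) (T : finType) (F : T -> bool) :
  \prod_a ((F a)%:R : R) = ([forall a, F a])%:R.
Proof.
case: (boolP [forall a, F a]) => [/forallP H|].
  by rewrite big1 // => a _; rewrite H.
rewrite negb_forall => /existsP [a Fa].
by rewrite (bigD1 a) //= (negbTE Fa) mul0r.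
Qed.

Section Main.
Variables (R : realFieldType) (N M : nat) (p : R) (C : 'M[bool]_(N, M)) (i : 'I_N).
Hypotheses (Hp0 : 0 <= p) (Hp1 : p <= 1).
Notation cfg := {ffun 'I_N -> bool}.
Notation Exp := (@Exp R N p).

Definition gb (a : 'I_M) (X : cfg) : bool :=
  C i a ==> [exists j, (j != i) && C j a && X j].
Definition g a X : R := (gb a X)%:R.
Definition G X : R := \prod_a g a X.
Definition D (a : 'I_M) : pred 'I_N := fun j => (j != i) && C j a && C i a.

Lemma h_eq (X : cfg) : ((i \in U0 C X)%:R : R) = (~~ X i)%:R * G X.
Proof.
rewrite inE /G /g prod_bool; case: (boolP (X i)) => Xi /=; first by rewrite mul0r.
rewrite mul1r; suff -> : ~~ sure_zero C X i = [forall a, gb a X] by [].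
rewrite /sure_zero negb_exists.
suff E : forall a, ~~ (C i a && ~~ test_outcome C X a) = gb a X.
  by apply/idP/idP => /forallP H; apply/forallP => a; [rewrite -E | rewrite E]; apply: H.
move=> a.
rewrite /gb negb_and negbK implybE /test_outcome; congr (_ || _).
apply/existsP/existsP => [[j /andP [Cj Xj]]|[j /andP [/andP [_ Cj] Xj]]]; exists j => //.
  rewrite Cj Xj !andbT; apply/negP => /eqP ji; move: Xi; by rewrite -ji Xj.
by rewrite Cj Xj.
Qed.

Lemma g_dep a : dep (D a) (g a).
Proof.
move=> X Y e; rewrite /g /gb; case: (boolP (C i a)) => //= Cia.
congr (_%:R); congr (nat_of_bool _); apply/existsP/existsP => [[j /andP [/andP [ji Cj] Xj]]|[j /andP [/andP [ji Cj] Xj]]];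
  exists j; rewrite ji Cj /=.
  by rewrite -e // /D ji Cj Cia.
by rewrite e // /D ji Cj Cia.
Qed.

Lemma g_upd a (X : cfg) b : g a (upd X i b) = g a X.
Proof. by apply: g_dep => k /andP [/andP [ki _] _]; rewrite ffunE (negbTE ki). Qed.

Lemma G_upd (X : cfg) b : G (upd X i b) = G X.
Proof. by apply: eq_bigr => a _; rewrite g_upd. Qed.

Lemma g_ge0 a X : 0 <= g a X.
Proof. by rewrite /g ler0n. Qed.

Lemma g_mono a : mono (g a).
Proof.
move=> X Y h; rewrite /g /gb; case: (C i a) => //=.
case: (boolP [exists j, _]) => [/existsP [j /andP [/andP [ji Cj] Xj]]|]; last by rewrite ler0n.
have Yj : Y j by move: (h j); rewrite Xj.
suff -> : [exists j, (j != i) && C j a && Y j] by [].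
by apply/existsP; exists j; rewrite ji Cj Yj.
Qed.

Lemma prod_mono (s : seq 'I_M) : mono (fun X => \prod_(a <- s) g a X).
Proof.
elim: s => [|a s IH] X Y h; first by rewrite !big_nil.
rewrite !big_cons; apply: ler_pM; [exact: g_ge0| |exact: g_mono|exact: IH].
by apply: prodr_ge0 => b _; apply: g_ge0.
Qed.

Lemma Exp_prod_ge (s : seq 'I_M) :
  \prod_(a <- s) Exp (g a) <= Exp (fun X => \prod_(a <- s) g a X).
Proof.
elim: s => [|a s IH]; first by rewrite big_nil /= (Exp_ext p (g := fun _ => 1)) ?Exp_const // => X; rewrite big_nil.
rewrite big_cons (Exp_ext p (f := fun X => \prod_(b <- a :: s) g b X) (g := fun X => g a X * \prod_(b <- s) g b X)); last by move=> X; rewrite big_cons.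
apply: le_trans (Exp_harris Hp0 Hp1 (g_mono a) (prod_mono s)).
apply: ler_wpM2l => //.
rewrite -[0](Exp_const N p); apply: (Exp_le Hp0 Hp1) => X; exact: g_ge0.
Qed.

Lemma Exp_h : Exp (fun X => (i \in U0 C X)%:R) = (1 - p) * Exp G.
Proof.
rewrite -(Exp_Ej p i) -Exp_scale; apply: Exp_ext => X.
by rewrite /Ej !h_eq !ffunE eqxx !G_upd /=; ring.
Qed.


Lemma Exp_allzero (S : pred 'I_N) :
  Exp (fun X => ([forall j, S j ==> ~~ X j])%:R) = (1 - p) ^+ #|S|.
Proof.
rewrite /Exp; under eq_bigr => X _ do rewrite mu_w -prod_bool -big_split /=.
rewrite -(bigA_distr_bigA (fun j b => w p b * (S j ==> ~~ b)%:R)) /=.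
rewrite (eq_bigr (fun j => if S j then 1 - p else 1)); last first.
  by move=> j _; rewrite big_bool /w; case: (S j) => /=; rewrite ?mulr0 ?mulr1 ?add0r ?addr0 // addrC subrK.
by rewrite -big_mkcond prodr_const.
Qed.

Lemma Exp_g a : Exp (g a) = (1 - (1 - p) ^+ (test_degree C a).-1) ^+ (C i a).
Proof.
case Cia: (C i a); last first.
  by rewrite expr0 (Exp_ext p (g := fun _ => 1)) ?Exp_const // => X; rewrite /g /gb Cia.
set S := fun j => (j != i) && C j a.
rewrite expr1 (Exp_ext p (g := fun X => 1 - ([forall j, S j ==> ~~ X j])%:R)); last first.
  move=> X; rewrite /g /gb Cia /=.
  have -> : [exists j, (j != i) && C j a && X j] = ~~ [forall j, S j ==> ~~ X j].
    rewrite negb_forall; apply/existsP/existsP => [[j Hj]|[j Hj]]; exists j.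
      by move: Hj; rewrite /S negb_imply negbK.
    by move: Hj; rewrite /S negb_imply negbK.
  by case: [forall j, _] => /=; rewrite ?subrr ?subr0.
rewrite Exp_sub Exp_allzero; congr (1 - (1 - p) ^+ _).
have -> : test_degree C a = #|[pred l | C l a]|.
  rewrite -sum1_card /test_degree [RHS]big_mkcond /=; apply: eq_bigr => l _.
  by rewrite ?inE; case: (C l a).
rewrite [#|[pred l | C l a]|](cardD1 i) inE Cia /= add0n.
by apply: eq_card => j; rewrite !inE.
Qed.

Lemma Exp_prod_eq (s : seq 'I_M) : girth_ge6 C -> uniq s ->
  Exp (fun X => \prod_(a <- s) g a X) = \prod_(a <- s) Exp (g a).
Proof.
move=> gir; elim: s => [|a s IH] /=.
  by move=> _; rewrite big_nil (Exp_ext p (g := fun _ => 1)) ?Exp_const // => X; rewrite big_nil.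
move=> /andP [as_ us].
rewrite (Exp_ext p (f := fun X => \prod_(b <- a :: s) g b X) (g := fun X => g a X * \prod_(b <- s) g b X)); last by move=> X; rewrite big_cons.
rewrite (Exp_indep p (A := D a) (B := fun k => has (fun b => D b k) s)) ?big_cons ?IH //.
- exact: g_dep.
- move=> X Y e; apply: eq_big_seq => b bs; apply: g_dep => k Dk; apply: e.
  by apply/hasP; exists b.
move=> k Dak /hasP [b bs Dbk].
have ab : a != b by apply/eqP => ab; rewrite ab bs in as_.
move: Dak Dbk; rewrite /D => /andP [/andP [ki Cka] Cia] /andP [/andP [_ Ckb] Cib].
have := gir i k a b; rewrite eq_sym ki ab Cia Cib Cka Ckb /=.
by move=> /(_ isT isT).
Qed.

End Main.

Lemma card_sum (N : nat) (R : realFieldType) (A : {set 'I_N}) :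
  (#|A|%:R : R) = \sum_i (i \in A)%:R.
Proof.
rewrite -sum1_card natr_sum big_mkcond /=; apply: eq_bigr => i _.
by case: (i \in A).
Qed.

Lemma expected_eq (R : realFieldType) (N M : nat) (p : R) (C : 'M[bool]_(N, M)) :
  expected_U0 p C = \sum_i Exp p (fun X => (i \in U0 C X)%:R).
Proof.
rewrite /expected_U0 /Exp; under eq_bigr => X _ do rewrite card_sum mulr_sumr.
by rewrite exchange_big.
Qed.

Unset Implicit Arguments.
Set Strict Implicit.

Theorem lemma1 (R : realFieldType) (N M : nat) (p : R)
  (HN : (1 <= N)%N) (HM : (1 <= M)%N) (Hp0 : 0 < p) (Hp1 : p < 1)
  (C : 'M[bool]_(N, M)) :
  bound_B p C <= expected_U0 p C /\
  (girth_ge6 C -> expected_U0 p C = bound_B p C).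
Proof.
have p0 : 0 <= p by apply: ltW.
have p1 : p <= 1 by apply: ltW.
have q0 : 0 <= 1 - p by rewrite subr_ge0.
rewrite expected_eq /bound_B mulr_sumr; split.
  apply: ler_sum => i _; rewrite Exp_h //; apply: ler_wpM2l => //.
  rewrite (eq_bigr (fun a => Exp p (g R C i a))); last by move=> a _; rewrite Exp_g.
  exact: (Exp_prod_ge C i p0 p1 (index_enum 'I_M)).
move=> gir; apply: eq_bigr => i _; rewrite Exp_h //; congr (_ * _).
rewrite (eq_bigr (fun a => Exp p (g R C i a))); last by move=> a _; rewrite Exp_g.
by rewrite -(Exp_prod_eq p i gir (index_enum_uniq _)).
Qed.
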